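(* Let $V,W$ be real vector spaces and let $g:V\times W\to\mathbb{R}$ be given by $$g(v,w)=\sigma(v)+2p(v,w)-\mu(w)-2f(v)+2h(w)+r,$$ where $\sigma:V\to\mathbb{R}$ and $\mu:W\to\mathbb{R}$ are positive definite quadratic forms, $p:V\times W\to\mathbb{R}$ is bilinear, $f:V\to\mathbb{R}$ and $h:W\to\mathbb{R}$ are linear, and $r\in\mathbb{R}$. Assume: (i) there exists $c\ge0$ such that $c^2\sigma(v)\mu(w)\ge|p(v,w)|^2$ for all $v\in V$, $w\in W$; (ii) $\inf_{v\in V}g(v,0)>-\infty$ and $\sup_{w\in W}g(0,w)<+\infty$. Then (a) $\inf_{v\in V}\sup_{w\in W}g(v,w)=\sup_{w\in W}\inf_{v\in V}g(v,w)$; and (b) there exists $c_1\ge0$ such that $\inf_{v\in V}g(v,w)\ge-c_1(1+\mu(w))$ for all $w\in W$ and $\sup_{w\in W}g(v,w)\le c_1(1+\sigma(v))$ for all $v\in V$.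
   Context: A quadratic form on a real vector space $V$ is a function $\sigma(v)=b(v,v)$ with $b$ symmetric bilinear; it is positive definite if $\sigma(v)>0$ for all $v\ne0$. *)

(* Defs.v *)
From HB Require Import structures.
From mathcomp Require Import all_boot all_order all_algebra.
From mathcomp Require Import all_classical all_reals.
From mathcomp Require Import ereal.
Set Implicit Arguments. Unset Strict Implicit. Unset Printing Implicit Defensive.
Import Order.TTheory GRing.Theory Num.Theory.
Local Open Scope ring_scope.

Definition is_linear_functional (R : realType) (V : lmodType R) (f : V -> R) :=
  forall (a : R) (x y : V), f (a *: x + y) = a * f x + f y.

Definition is_bilinear (R : realType) (V W : lmodType R) (b : V -> W -> R) :=
  (forall (a : R) (x y : V) (w : W), b (a *: x + y) w = a * b x w + b y w) /\
  (forall (a : R) (v : V) (x y : W), b v (a *: x + y) = a * b v x + b v y).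

Definition is_quadratic_form (R : realType) (V : lmodType R) (s : V -> R) :=
  exists b : V -> V -> R,
    is_bilinear b /\ (forall x y : V, b x y = b y x) /\ (forall v : V, s v = b v v).

Definition is_pos_def_quadratic_form (R : realType) (V : lmodType R) (s : V -> R) :=
  is_quadratic_form s /\ (forall v : V, v != 0 -> 0 < s v).

(* Main.v *)
Require Import Defs.
From HB Require Import structures.
From mathcomp Require Import all_boot all_order all_algebra.
From mathcomp Require Import all_classical all_reals.
From mathcomp Require Import ereal.
From mathcomp Require Import ring lra.
Import Order.TTheory GRing.Theory Num.Theory.
Local Open Scope classical_set_scope.
Local Open Scope ring_scope.


Lemma discr (R : realType) (al be ga : R) : 0 <= al ->
  (forall s, 0 <= al * s ^+ 2 + 2 * be * s + ga) -> be ^+ 2 <= al * ga.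
Proof.
move=> al0 H.
have [al00|alp] := eqVneq al 0.
  subst al.
  have [be0|bn0] := eqVneq be 0; first by rewrite be0; nra.
  have := H (- (ga + 1) / (2 * be)).
  have -> : 2 * be * (- (ga + 1) / (2 * be)) = - (ga + 1).
    by field.
  rewrite !mul0r add0r; lra.
have alg : 0 < al by rewrite lt_def alp al0.
have := H (- be / al).
set s := - be / al.
have hs : al * s = - be by rewrite /s; field.
nra.
Qed.

Lemma arith (R : realType) (a M N K P E2 : R) : 0 < a -> a < 1 -> 0 <= K ->
  (1 - a ^+ 2 / 12) * P < E2 -> E2 <= P ->
  M ^+ 2 <= (1 - a) * P * K -> N ^+ 2 <= K * (P - E2) ->
  (M + N) ^+ 2 <= (1 - a ^+ 2 / 24) * K * E2.
Proof.
move=> a0 a1 K0 hP hE hM hN.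
have h1 : a * (M + N) ^+ 2 <= (a + a ^+ 2 / 2) * M ^+ 2 + (a + 2) * N ^+ 2.
  have := sqr_ge0 (a * M - 2 * N); nra.
have h2 : a * (M + N) ^+ 2 <= K * ((a + a ^+ 2 / 2) * (1 - a) * P + (a + 2) * (P - E2)).
  have t1 : (a + a ^+ 2 / 2) * M ^+ 2 <= (a + a ^+ 2 / 2) * ((1 - a) * P * K).
    by apply: ler_wpM2l => //; nra.
  have t2 : (a + 2) * N ^+ 2 <= (a + 2) * (K * (P - E2)).
    by apply: ler_wpM2l => //; nra.
  apply: (le_trans h1).
  have -> : K * ((a + a ^+ 2 / 2) * (1 - a) * P + (a + 2) * (P - E2)) =
    (a + a ^+ 2 / 2) * ((1 - a) * P * K) + (a + 2) * (K * (P - E2)) by ring.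
  exact: lerD.
have h3 : (1 - a ^+ 2 / 12) * ((a + a ^+ 2 / 2) * (1 - a) * P + (a + 2) * (P - E2))
    <= ((a + a ^+ 2 / 2) * (1 - a) + (a + 2) * (a ^+ 2 / 12)) * E2.
  rewrite -subr_ge0.
  have -> : ((a + a ^+ 2 / 2) * (1 - a) + (a + 2) * (a ^+ 2 / 12)) * E2 -
     (1 - a ^+ 2 / 12) * ((a + a ^+ 2 / 2) * (1 - a) * P + (a + 2) * (P - E2))
    = ((a + a ^+ 2 / 2) * (1 - a) + (a + 2)) * (E2 - (1 - a ^+ 2 / 12) * P) by ring.
  apply: mulr_ge0; nra.
have h4 : ((a + a ^+ 2 / 2) * (1 - a) + (a + 2) * (a ^+ 2 / 12))
    <= a * (1 - a ^+ 2 / 24) * (1 - a ^+ 2 / 12).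
  rewrite -subr_ge0.
  have -> : a * (1 - a ^+ 2 / 24) * (1 - a ^+ 2 / 12) -
     ((a + a ^+ 2 / 2) * (1 - a) + (a + 2) * (a ^+ 2 / 12))
    = a ^+ 2 * (1 / 3 + 7 / 24 * a + a ^+ 3 / 288) by field.
  apply: mulr_ge0; first exact: sqr_ge0.
  have : 0 <= a ^+ 3 by rewrite exprn_ge0 // ltW.
  lra.
have th : 0 < 1 - a ^+ 2 / 12 by nra.
have h5 : (a + a ^+ 2 / 2) * (1 - a) * P + (a + 2) * (P - E2)
    <= a * (1 - a ^+ 2 / 24) * E2.
  have E0 : 0 <= E2 by nra.
  nra.
nra.
Qed.



Section Lin.
Variable R : realType.
Variable X : lmodType R.
Variable e : X -> R.
Hypothesis elin : forall a x y, e (a *: x + y) = a * e x + e y.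
Lemma lin0 : e 0 = 0.
Proof. have := elin 1 0 0; rewrite scale1r addr0 mul1r => h; lra. Qed.
Lemma linZ a x : e (a *: x) = a * e x.
Proof. by rewrite -[a *: x]addr0 elin lin0 addr0. Qed.
Lemma linD x y : e (x + y) = e x + e y.
Proof. by rewrite -[x]scale1r elin mul1r scale1r. Qed.
Lemma linN x : e (- x) = - e x.
Proof. by rewrite -scaleN1r linZ mulN1r. Qed.
Lemma linB x y : e (x - y) = e x - e y.
Proof. by rewrite linD linN. Qed.
End Lin.

Section Step.
Variable R : realType.
Variable X : lmodType R.
Variable B : X -> X -> R.
Hypothesis Blin : forall a x y z, B (a *: x + y) z = a * B x z + B y z.
Hypothesis Bsym : forall x y, B x y = B y x.
Hypothesis Bpos : forall x, 0 <= B x x.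
Variable Lf : X -> X -> R.
Hypothesis Llin : forall u a x y, Lf u (a *: x + y) = a * Lf u x + Lf u y.
Hypothesis Ldiag : forall u, Lf u u = B u u.
Variable C : R.
Hypothesis C0 : 0 < C.
Hypothesis Lbd : forall u x, Lf u x ^+ 2 <= C * B u u * B x x.

Definition ca := (1 + C)^-1.
Definition rho := 1 - ca ^+ 2 / 24.

Lemma ca_gt0 : 0 < ca. Proof. rewrite /ca invr_gt0. have c0 := C0. lra. Qed.
Lemma ca_lt1 : ca < 1.
Proof. have c0 := C0. rewrite /ca invf_lt1; first lra. lra. Qed.
Lemma ca_eq : ca * (1 + C) = 1.
Proof. have c0 := C0. rewrite /ca mulVf //; apply/eqP => h; lra. Qed.

Lemma Blinr a x y z : B z (a *: x + y) = a * B z x + B z y.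
Proof. by rewrite Bsym Blin (Bsym x) (Bsym y). Qed.

Lemma Bquad s x u : B (s *: x + u) (s *: x + u) = s ^+ 2 * B x x + 2 * s * B u x + B u u.
Proof. rewrite Blin !Blinr (Bsym x u); ring. Qed.

Lemma Bcs x y : B x y ^+ 2 <= B x x * B y y.
Proof.
apply: discr; first exact: Bpos.
move=> s.
have -> : B x x * s ^+ 2 + 2 * B x y * s + B y y = B (s *: x + y) (s *: x + y).
  by rewrite Bquad (Bsym x y); ring.
exact: Bpos.
Qed.

Lemma Bsc2 s x : B (s *: x) (s *: x) = s ^+ 2 * B x x.
Proof.
have B0 : forall z, B 0 z = 0.
  move=> z; have := Blin 1 0 0 z; rewrite scale1r addr0 mul1r => h.
  have : B 0 z + B 0 z = B 0 z + 0 by rewrite -h addr0.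
  by move/addrI.
by have := Bquad s x 0; rewrite addr0 => ->; rewrite !B0; ring.
Qed.

Lemma Badd2 x y : B (x + y) (x + y) = B x x + 2 * B y x + B y y.
Proof. by rewrite -[x]scale1r Bquad scale1r; ring. Qed.

Lemma step (e : X -> R) (D : R) : (forall a x y, e (a *: x + y) = a * e x + e y) ->
  0 <= D -> (forall x, e x ^+ 2 <= D * B x x) ->
  (forall x, e x ^+ 2 <= rho * D * B x x) \/
  exists u t, forall x, (e x - t * Lf u x) ^+ 2 <= rho * D * B x x.
Proof.
move=> elin D0 eb.
have c0 := C0.
have a0 := ca_gt0; have a1 := ca_lt1; have aeq := ca_eq.
have rth : 1 - ca ^+ 2 / 12 <= rho by rewrite /rho; nra.
have rhoe : rho = 1 - ca ^+ 2 / 24 by [].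
set a := ca in a0 a1 aeq rth rhoe *.
clearbody a.
have [[u hu]|nu] := pselect (exists u, (1 - a ^+ 2 / 12) * D * B u u < e u ^+ 2); last first.
  left => x.
  have : ~ ((1 - a ^+ 2 / 12) * D * B x x < e x ^+ 2) by move=> h; apply: nu; exists x.
  move/negP; rewrite -leNgt => h; apply: (le_trans h).
  by apply: (ler_wpM2r (Bpos x)); apply: (ler_wpM2r D0).
right.
have Q0 := Bpos u.
have hbu := eb u.
have eu0 : e u != 0.
  apply/eqP=> h; move: hu; rewrite h expr0n /=.
  have : 0 <= (1 - a ^+ 2 / 12) * D * B u u by rewrite mulr_ge0 // mulr_ge0 //; nra.
  lra.
have E2p : 0 < e u ^+ 2 by rewrite exprn_even_gt0.
have Qp : 0 < B u u.
  rewrite lt_def Q0 andbT; apply/eqP => h; move: hbu; rewrite h mulr0; lra.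
exists u, (a * D / e u) => x.
have hnear : (e u * e x - D * B u x) ^+ 2 <= (D * B x x - e x ^+ 2) * (D * B u u - e u ^+ 2).
  have := @discr R (D * B x x - e x ^+ 2) (D * B u x - e u * e x)
    (D * B u u - e u ^+ 2).
  have -> : (D * B u x - e u * e x) ^+ 2 = (e u * e x - D * B u x) ^+ 2 by ring.
  apply; first by have := eb x; lra.
  move=> s; have := eb (s *: x + u); rewrite Bquad elin.
  move=> h.
  have -> : (D * B x x - e x ^+ 2) * s ^+ 2 + 2 * (D * B u x - e u * e x) * s + (D * B u u - e u ^+ 2)
     = D * (s ^+ 2 * B x x + 2 * s * B u x + B u u) - (s * e x + e u) ^+ 2 by ring.
  by rewrite subr_ge0.
set a0' := B u x / B u u.
set y := x - a0' *: u.
have xe : x = a0' *: u + y by rewrite /y addrC subrK.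
have Buy : B u y = 0.
  rewrite /y -scaleNr addrC Blinr /a0'; field; apply/eqP => h; lra.
have qx : B x x = a0' ^+ 2 * B u u + B y y.
  rewrite {1 2}xe Bquad (Bsym y u) Buy; ring.
have Lx : Lf u x = a0' * B u u + Lf u y by rewrite {1}xe Llin Ldiag.
have Bux : B u x = a0' * B u u by rewrite /a0'; field; apply/eqP => h; lra.
clearbody y a0'.
have hm : (B u x - a * Lf u x) ^+ 2 <= (1 - a) * B u u * B x x.
  rewrite Lx Bux qx.
  have hl := Lbd u y.
  have Ly0 : 0 <= B y y := Bpos y.
  set P := a0' * B u u in hl *.
  set Qv := Lf u y in hl *.
  have -> : (P - a * (P + Qv)) = (1 - a) * P - a * Qv by ring.
  have hk : (1 - a) * B u u * (a0' ^+ 2 * B u u + B y y) =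
     ((1 - a) ^+ 2 + a ^+ 2 * C) * (P ^+ 2 + B u u * B y y).
    rewrite /P.
    have -> : (1 - a) ^+ 2 + a ^+ 2 * C = 1 - a.
      have -> : a ^+ 2 * C = a * (a * (1 + C)) - a ^+ 2 by ring.
      rewrite aeq; ring.
    ring.
  rewrite hk.
  (* Cauchy-Schwarz weighted *)
  set al := 1 - a. set be := a.
  set W := B u u * B y y.
  have W0 : 0 <= W by rewrite /W mulr_ge0.
  have hQ : Qv ^+ 2 <= C * W by rewrite /W mulrA.
  have key : C * ((al ^+ 2 + be ^+ 2 * C) * (P ^+ 2 + W) - (al * P - be * Qv) ^+ 2) >= 0.
    have := sqr_ge0 (al * Qv + be * C * P).
    have : 0 <= al ^+ 2 * (C * W - Qv ^+ 2) by rewrite mulr_ge0 // ?sqr_ge0 // subr_ge0.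
    have : 0 <= be ^+ 2 * C * (C * W - Qv ^+ 2) by rewrite mulr_ge0 ?subr_ge0 // mulr_ge0 // ?sqr_ge0 // ltW.
    nra.
  have : 0 <= (al ^+ 2 + be ^+ 2 * C) * (P ^+ 2 + W) - (al * P - be * Qv) ^+ 2.
    by rewrite -(pmulr_rge0 _ C0).
  rewrite subr_ge0 => h.
  exact: h.
have K0 : 0 <= D * B x x by rewrite mulr_ge0 // Bpos.
have hM : (D * (B u x - a * Lf u x)) ^+ 2 <= (1 - a) * (D * B u u) * (D * B x x).
  rewrite exprMn.
  have -> : (1 - a) * (D * B u u) * (D * B x x) = D ^+ 2 * ((1 - a) * B u u * B x x) by ring.
  by apply: ler_wpM2l => //; rewrite sqr_ge0.
have hN : (e u * e x - D * B u x) ^+ 2 <= (D * B x x) * (D * B u u - e u ^+ 2).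
  apply: (le_trans hnear); apply: ler_wpM2r; first by rewrite subr_ge0.
  by rewrite lerBlDr lerDl sqr_ge0.
have hu' : (1 - a ^+ 2 / 12) * (D * B u u) < e u ^+ 2 by rewrite mulrA.
have := @arith R a _ _ _ _ _ a0 a1 K0 hu' hbu hM hN.
rewrite -rhoe => hf.
have hid : (e x - a * D / e u * Lf u x) ^+ 2 * e u ^+ 2 =
   (D * (B u x - a * Lf u x) + (e u * e x - D * B u x)) ^+ 2.
  by field.
rewrite -(ler_pM2r E2p) hid.
by move: hf; rewrite -!mulrA.
Qed.
Lemma bern (b : R) (n : nat) : 0 <= b -> b <= 1 -> (1 - b) ^+ n * (1 + n%:R * b) <= 1.
Proof.
move=> b0 b1; elim: n => [|n IH]; first by rewrite expr0 mul0r addr0 mul1r.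
rewrite exprS -mulrA.
have hp : 0 <= (1 - b) ^+ n by rewrite exprn_ge0 // subr_ge0.
have : (1 - b) * (1 + n.+1%:R * b) <= 1 + n%:R * b.
  rewrite -addn1 natrD; have : 0 <= n%:R :> R by []. nra.
move=> h; apply: le_trans IH.
rewrite mulrCA.
exact: ler_wpM2l.
Qed.

Lemma rho_pos : 0 < rho.
Proof. have a0 := ca_gt0; have a1 := ca_lt1; rewrite /rho; nra. Qed.

Lemma iter_bound (E : X -> X -> R) :
  (forall z a x y, E z (a *: x + y) = a * E z x + E z y) ->
  (forall z u t x, E (t *: u + z) x = E z x + t * Lf u x) ->
  forall z0 D0, 0 <= D0 -> (forall x, E z0 x ^+ 2 <= D0 * B x x) ->
  forall eps, 0 < eps -> exists z, forall x, E z x ^+ 2 <= eps * B x x.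
Proof.
move=> Elin Eaff z0 D0 D00 h0 eps ep.
have rp := rho_pos.
have hn : forall n, exists z, forall x, E z x ^+ 2 <= rho ^+ n * D0 * B x x.
  elim=> [|n [z hz]]; first by exists z0 => x; rewrite expr0 mul1r.
  have hD : 0 <= rho ^+ n * D0 by rewrite mulr_ge0 // exprn_ge0 // ltW.
  have := step (E z) (rho ^+ n * D0) (Elin z) hD hz.
  case=> [h|[u [t h]]].
    by exists z => x; rewrite (exprS rho) -(mulrA rho); exact: h.
  exists ((- t) *: u + z) => x; rewrite Eaff mulNr -/(_ - _).
  by rewrite (exprS rho) -(mulrA rho); exact: h.
have a0 := ca_gt0; have a1 := ca_lt1.
set b := ca ^+ 2 / 24.
have b0 : 0 < b by rewrite /b; nra.
have b1 : b <= 1 by rewrite /b; nra.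
have hx : 0 <= D0 / (b * eps) by rewrite divr_ge0 // mulr_ge0 // ltW.
have := archi_boundP hx.
set n := Num.Def.archi_bound _ => hnb.
have [z hz] := hn n.
exists z => x; apply: (le_trans (hz x)).
apply: ler_wpM2r; first exact: Bpos.
have hbe := bern b n (ltW b0) b1.
have : D0 <= n%:R * b * eps.
  rewrite ltr_pdivrMr in hnb; last by rewrite mulr_gt0.
  by rewrite -mulrA ltW.
have rn : rho ^+ n = (1 - b) ^+ n by [].
rewrite rn.
have hp : 0 <= (1 - b) ^+ n by rewrite exprn_ge0 // subr_ge0.
have : 0 <= n%:R :> R by [].
nra.
Qed.

End Step.



Lemma inf_fin (R : realType) (T : Type) (t0 : T) (F : T -> R) :
  (-oo < ereal_inf [set (F v)%:E | v in [set: T]])%E -> exists M, forall v, M <= F v.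
Proof.
have lb : forall v, (ereal_inf [set (F v)%:E | v in [set: T]] <= (F v)%:E)%E.
  by move=> v; apply: ereal_inf_lbound; exists v.
move: lb; case: (ereal_inf _) => [r||] lb hi //.
  by exists r => v; have := lb v; rewrite lee_fin.
by have := lb t0.
Qed.

Lemma sup_fin (R : realType) (T : Type) (t0 : T) (F : T -> R) :
  (ereal_sup [set (F v)%:E | v in [set: T]] < +oo)%E -> exists M, forall v, F v <= M.
Proof.
have ub : forall v, ((F v)%:E <= ereal_sup [set (F v)%:E | v in [set: T]])%E.
  by move=> v; apply: ereal_sup_ubound; exists v.
move: ub; case: (ereal_sup _) => [r||] ub hi //.
  by exists r => v; have := ub v; rewrite lee_fin.
by have := ub t0.
Qed.

Lemma quadlb (R : realType) (r1 s eps : R) : 0 <= s -> 0 < eps -> r1 ^+ 2 <= eps * s ->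
  - eps <= 2 * r1 + s.
Proof.
move=> s0 e0 h; rewrite leNgt; apply/negP => hl.
have h1 : 0 < s + eps by lra.
have h2 : s + eps < - (2 * r1) by lra.
have h3 : (s + eps) ^+ 2 < (2 * r1) ^+ 2.
  by have := ltrXn2r 2 (ltW h1) h2; rewrite sqrrN.
have := sqr_ge0 (s - eps); nra.
Qed.

Lemma abs2 (R : realType) (x a b : R) : 0 <= a -> 0 <= b -> x ^+ 2 <= a * b ->
  2 * x <= a + b.
Proof.
move=> a0 b0 h; rewrite leNgt; apply/negP => hl.
have h1 : 0 <= a + b by lra.
have h3 : (a + b) ^+ 2 < (2 * x) ^+ 2 by have := ltrXn2r 2 h1 hl.
have := sqr_ge0 (a - b); nra.
Qed.

Lemma lp_arith (R : realType) (A1 A2 A3 A4 su sx mu' mx c : R) :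
  0 <= su -> 0 <= sx -> 0 <= mu' -> 0 <= mx ->
  A1 ^+ 2 <= su * sx -> A2 ^+ 2 <= c ^+ 2 * sx * mu' -> A3 ^+ 2 <= mu' * mx ->
  A4 ^+ 2 <= c ^+ 2 * su * mx ->
  (A1 + A2 + A3 - A4) ^+ 2 <= 4 * (1 + c ^+ 2) * (su + mu') * (sx + mx).
Proof.
move=> h1 h2 h3 h4 a1 a2 a3 a4.
have e1 : (A1 + A2 + A3 - A4) ^+ 2 <= 4 * (A1 ^+ 2 + A2 ^+ 2 + A3 ^+ 2 + A4 ^+ 2).
  rewrite -subr_ge0.
  have -> : 4 * (A1 ^+ 2 + A2 ^+ 2 + A3 ^+ 2 + A4 ^+ 2) - (A1 + A2 + A3 - A4) ^+ 2 =
    (A1 - A2) ^+ 2 + (A1 - A3) ^+ 2 + (A1 + A4) ^+ 2 + (A2 - A3) ^+ 2 + (A2 + A4) ^+ 2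
    + (A3 + A4) ^+ 2 by ring.
  by rewrite !addr_ge0 ?sqr_ge0.
apply: (le_trans e1).
have c2 : 0 <= c ^+ 2 := sqr_ge0 c.
have e2 : 4 * (A1 ^+ 2 + A2 ^+ 2 + A3 ^+ 2 + A4 ^+ 2) <=
  4 * (su * sx + c ^+ 2 * sx * mu' + mu' * mx + c ^+ 2 * su * mx) by lra.
apply: (le_trans e2).
rewrite -subr_ge0.
have -> : 4 * (1 + c ^+ 2) * (su + mu') * (sx + mx) -
   4 * (su * sx + c ^+ 2 * sx * mu' + mu' * mx + c ^+ 2 * su * mx) =
   4 * (c ^+ 2 * (su * sx) + su * mx + mu' * sx + c ^+ 2 * (mu' * mx)) by ring.
have p1 := mulr_ge0 h1 h2; have p2 := mulr_ge0 h1 h4; have p3 := mulr_ge0 h3 h2.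
have p4 := mulr_ge0 h3 h4.
have q1 := mulr_ge0 c2 p1; have q2 := mulr_ge0 c2 p4.
lra.
Qed.

Theorem theorem3p2 (R : realType) (V W : lmodType R)
  (sigma : V -> R) (mu : W -> R) (p : V -> W -> R) (f : V -> R) (h : W -> R)
  (r : R) (g : V -> W -> R)
  (Hg : forall v w, g v w = sigma v + 2 * p v w - mu w - 2 * f v + 2 * h w + r)
  (Hsigma : is_pos_def_quadratic_form sigma)
  (Hmu : is_pos_def_quadratic_form mu)
  (Hp : is_bilinear p)
  (Hf : is_linear_functional f)
  (Hh : is_linear_functional h)
  (Hi : exists c : R, 0 <= c /\
          forall v w, `|p v w| ^+ 2 <= c ^+ 2 * sigma v * mu w)
  (Hii1 : (-oo < ereal_inf [set (g v 0)%:E | v in [set: V]])%E)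
  (Hii2 : (ereal_sup [set (g 0 w)%:E | w in [set: W]] < +oo)%E) :
  ereal_inf [set ereal_sup [set (g v w)%:E | w in [set: W]] | v in [set: V]] =
  ereal_sup [set ereal_inf [set (g v w)%:E | v in [set: V]] | w in [set: W]]
  /\
  exists c1 : R, 0 <= c1 /\
    (forall w : W, ((- c1 * (1 + mu w))%:E <= ereal_inf [set (g v w)%:E | v in [set: V]])%E) /\
    (forall v : V, (ereal_sup [set (g v w)%:E | w in [set: W]] <= (c1 * (1 + sigma v))%:E)%E).
Proof.
case: Hsigma => [[bs [[bs1 bs2] [bsym bsdef]]] spos].
case: Hmu => [[bm [[bm1 bm2] [bmsym bmdef]]] mpos].
case: Hp => [p1 p2].
case: Hi => c [c0 hc].
have hc' : forall v w, p v w ^+ 2 <= c ^+ 2 * sigma v * mu w.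
  by move=> v w; rewrite -real_normK ?num_real.
have bs0 : forall x, bs 0 x = 0 by move=> x; exact: (@lin0 _ _ (bs^~ x) (fun a y z => bs1 a y z x)).
have bm0 : forall x, bm 0 x = 0 by move=> x; exact: (@lin0 _ _ (bm^~ x) (fun a y z => bm1 a y z x)).
have s0 : forall v, 0 <= sigma v.
  move=> v; have [->|vn] := eqVneq v 0; first by rewrite bsdef bs0.
  by rewrite ltW // spos.
have m0 : forall w, 0 <= mu w.
  move=> w; have [->|wn] := eqVneq w 0; first by rewrite bmdef bm0.
  by rewrite ltW // mpos.
have f0 : f 0 = 0 := @lin0 _ _ f Hf.
have h0 : h 0 = 0 := @lin0 _ _ h Hh.
have pl0 : forall w, p 0 w = 0 by move=> w; exact: (@lin0 _ _ (p^~ w) (fun a x y => p1 a x y w)).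
have pr0 : forall v, p v 0 = 0 by move=> v; exact: (@lin0 _ _ (p v) (fun a x y => p2 a v x y)).
have mu0 : mu 0 = 0 by rewrite bmdef bm0.
have sig0 : sigma 0 = 0 by rewrite bsdef bs0.
have sigZ : forall s v, sigma (s *: v) = s ^+ 2 * sigma v.
  by move=> s v; rewrite !bsdef (@Bsc2 _ _ bs bs1 bsym).
have muZ : forall s w, mu (s *: w) = s ^+ 2 * mu w.
  by move=> s w; rewrite !bmdef (@Bsc2 _ _ bm bm1 bmsym).
have fZ : forall s v, f (s *: v) = s * f v by move=> s v; exact: (@linZ _ _ f Hf).
have hZ : forall s w, h (s *: w) = s * h w by move=> s w; exact: (@linZ _ _ h Hh).
have gv0 : forall v, g v 0 = sigma v - 2 * f v + r by move=> v; rewrite Hg pr0 mu0 h0; ring.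
have g0w : forall w, g 0 w = - mu w + 2 * h w + r by move=> w; rewrite Hg pl0 sig0 f0; ring.
have [M1 hM1] := @inf_fin R V 0 (fun v => g v 0) Hii1.
have [M2 hM2] := @sup_fin R W 0 (fun w => g 0 w) Hii2.
have K1p : 0 <= r - M1 by have := hM1 0; rewrite /= gv0 sig0 f0; lra.
have K2p : 0 <= M2 - r by have := hM2 0; rewrite /= g0w mu0 h0; lra.
have hfK : forall v, f v ^+ 2 <= (r - M1) * sigma v.
  move=> v; rewrite -sqrrN mulrC; apply: (@discr R (sigma v) (- f v) (r - M1) (s0 v)).
  move=> s; have := hM1 (s *: v); rewrite /= gv0 sigZ fZ; lra.
have hhK : forall w, h w ^+ 2 <= (M2 - r) * mu w.
  move=> w; rewrite -sqrrN mulrC; apply: (@discr R (mu w) (- h w) (M2 - r) (m0 w)).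
  move=> s; have := hM2 (s *: w); rewrite /= g0w muZ hZ; lra.
pose Bp := fun z z' : (V * W)%type => bs z.1 z'.1 + bm z.2 z'.2.
pose Lp := fun u x : (V * W)%type => bs u.1 x.1 + p x.1 u.2 + bm u.2 x.2 - p u.1 x.2.
pose Ep := fun z x : (V * W)%type =>
  bs z.1 x.1 + p x.1 z.2 - f x.1 + bm z.2 x.2 - p z.1 x.2 - h x.2.
have BpLin : forall a x y z, Bp (a *: x + y) z = a * Bp x z + Bp y z.
  by move=> a [x1 x2] [y1 y2] [z1 z2]; rewrite /Bp /= bs1 bm1; ring.
have BpSym : forall x y, Bp x y = Bp y x.
  by move=> [x1 x2] [y1 y2]; rewrite /Bp /= bsym bmsym.
have BpPos : forall x, 0 <= Bp x x.
  by move=> [x1 x2]; rewrite /Bp /= -bsdef -bmdef addr_ge0.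
have LpLin : forall u a x y, Lp u (a *: x + y) = a * Lp u x + Lp u y.
  move=> [u1 u2] a [x1 x2] [y1 y2]; rewrite /Lp /= bs2 bm2 p1 p2; ring.
have LpDiag : forall u, Lp u u = Bp u u.
  by move=> [u1 u2]; rewrite /Lp /Bp /=; ring.
have C0 : 0 < 4 * (1 + c ^+ 2) by have := sqr_ge0 c; lra.
have csbs : forall x y, bs x y ^+ 2 <= sigma x * sigma y.
  by move=> x y; rewrite !bsdef; apply: (@Bcs _ _ bs bs1 bsym) => z; rewrite -bsdef.
have csbm : forall x y, bm x y ^+ 2 <= mu x * mu y.
  by move=> x y; rewrite !bmdef; apply: (@Bcs _ _ bm bm1 bmsym) => z; rewrite -bmdef.
have LpBd : forall u x, Lp u x ^+ 2 <= 4 * (1 + c ^+ 2) * Bp u u * Bp x x.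
  move=> [u1 u2] [x1 x2]; rewrite /Lp /Bp /= -!bsdef -!bmdef.
  by apply: lp_arith; rewrite ?s0 ?m0 ?csbs ?csbm ?hc'.
have EpLin : forall z a x y, Ep z (a *: x + y) = a * Ep z x + Ep z y.
  by move=> [z1 z2] a [x1 x2] [y1 y2]; rewrite /Ep /= bs2 p1 Hf bm2 p2 Hh; ring.
have EpAff : forall z u t x, Ep (t *: u + z) x = Ep z x + t * Lp u x.
  by move=> [z1 z2] [u1 u2] t [x1 x2]; rewrite /Ep /Lp /= bs1 p2 bm1 p1; ring.
have bsr0 : forall x, bs x 0 = 0 by move=> x; rewrite bsym bs0.
have bmr0 : forall x, bm x 0 = 0 by move=> x; rewrite bmsym bm0.
have D00 : 0 <= 2 * ((r - M1) + (M2 - r)) by lra.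
have hE0 : forall x, Ep 0 x ^+ 2 <= 2 * ((r - M1) + (M2 - r)) * Bp x x.
  move=> [x1 x2]; rewrite /Ep /Bp /= bs0 bm0 pr0 pl0 -bsdef -bmdef.
  have := hfK x1; have := hhK x2; have := s0 x1; have := m0 x2.
  move=> a b c' d.
  have := mulr_ge0 K1p b; have := mulr_ge0 K2p a.
  have := sqr_ge0 (f x1 - h x2).
  nra.
have sigD : forall x y, sigma (x + y) = sigma x + 2 * bs y x + sigma y.
  by move=> x y; rewrite !bsdef (@Badd2 _ _ bs bs1 bsym).
have muD : forall x y, mu (x + y) = mu x + 2 * bm y x + mu y.
  by move=> x y; rewrite !bmdef (@Badd2 _ _ bm bm1 bmsym).
have pDl : forall x y w, p (x + y) w = p x w + p y w.
  by move=> x y w; exact: (@linD _ _ (p^~ w) (fun a x y => p1 a x y w)).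
have pDr : forall v x y, p v (x + y) = p v x + p v y.
  by move=> v x y; exact: (@linD _ _ (p v) (fun a x y => p2 a v x y)).
have fD : forall x y, f (x + y) = f x + f y by move=> x y; exact: (@linD _ _ f Hf).
have hD : forall x y, h (x + y) = h x + h y by move=> x y; exact: (@linD _ _ h Hh).
have main : forall eps, 0 < eps -> exists v w,
    (forall v', g v w - eps <= g v' w) /\ (forall w', g v w' <= g v w + eps).
  move=> eps ep.
  have [[v w] hz] := @iter_bound R _ Bp BpLin BpSym BpPos Lp LpLin LpDiag _ C0 LpBd Ep
    EpLin EpAff 0 _ D00 hE0 eps ep.
  exists v, w; split.
  - move=> v'; set d := v' - v.
    have -> : v' = d + v by rewrite /d subrK.
    have := hz (d, 0); rewrite /Ep /Bp /= bmr0 pr0 h0 -bsdef bm0 !addr0 !subr0 => hb.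
    have := @quadlb R _ _ _ (s0 d) ep hb.
    rewrite !Hg sigD pDl fD; lra.
  - move=> w'; set d := w' - w.
    have -> : w' = d + w by rewrite /d subrK.
    have := hz (0, d); rewrite /Ep /Bp /= bsr0 pl0 f0 -bmdef bs0 add0r => hb.
    have {hb} hb : (bm w d - p v d - h d) ^+ 2 <= eps * mu d.
      by move: hb; rewrite ?addr0 ?subr0 ?add0r.
    have := @quadlb R _ _ _ (m0 d) ep hb.
    rewrite !Hg muD pDr hD; lra.
split.
  apply/eqP; rewrite eq_le; apply/andP; split.
  - apply/lee_addgt0Pr => e e0.
    have e2 : 0 < e / 2 by rewrite divr_gt0.
    have [v [w [hv hw]]] := main (e / 2) e2.
    apply: (@le_trans _ _ (ereal_sup [set (g v w')%:E | w' in [set: W]])).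
      by apply: ereal_inf_lbound; exists v.
    apply: (@le_trans _ _ ((g v w + e / 2)%:E)).
      by apply: ge_ereal_sup => _ [w' _ <-]; rewrite lee_fin hw.
    have -> : g v w + e / 2 = (g v w - e / 2) + e by field.
    rewrite EFinD; apply: leeD2r.
    apply: (@le_trans _ _ (ereal_inf [set (g v' w)%:E | v' in [set: V]])).
      by apply: le_ereal_inf_tmp => _ [v' _ <-]; rewrite lee_fin hv.
    by apply: ereal_sup_ubound; exists w.
  - apply: ge_ereal_sup => _ [w _ <-]; apply: le_ereal_inf_tmp => _ [v _ <-].
    apply: (@le_trans _ _ (g v w)%:E).
      by apply: ereal_inf_lbound; exists v.
    by apply: ereal_sup_ubound; exists w.
have c2 : 0 <= c ^+ 2 := sqr_ge0 c.
have ra : 0 <= `|r| := normr_ge0 r.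
have rb : - `|r| <= r <= `|r| by rewrite -ler_norml.
move/andP: rb => [rb1 rb2].
exists (2 + 2 * c ^+ 2 + 2 * (r - M1) + 2 * (M2 - r) + `|r|); split; first by lra.
split.
- move=> w; apply: le_ereal_inf_tmp => _ [v _ <-]; rewrite lee_fin Hg.
  have hp : 2 * (- p v w) <= sigma v / 2 + 2 * c ^+ 2 * mu w.
    apply: (@abs2 R _ _ _); rewrite ?divr_ge0 ?mulr_ge0 ?s0 ?m0 //.
    by rewrite sqrrN; have := hc' v w; lra.
  have hf : 2 * f v <= sigma v / 2 + 2 * (r - M1).
    apply: (@abs2 R _ _ _); rewrite ?divr_ge0 ?mulr_ge0 ?s0 //.
    by have := hfK v; lra.
  have hh : 2 * (- h w) <= mu w + (M2 - r).
    apply: (@abs2 R _ _ _); rewrite ?m0 //.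
    by rewrite sqrrN; have := hhK w; lra.
  have hm : 0 <= (2 * (r - M1) + 2 * (M2 - r) + `|r|) * mu w.
    by rewrite mulr_ge0 ?m0 //; lra.
  have := m0 w; nra.
- move=> v; apply: ge_ereal_sup => _ [w _ <-]; rewrite lee_fin Hg.
  have hp : 2 * p v w <= mu w / 2 + 2 * c ^+ 2 * sigma v.
    apply: (@abs2 R _ _ _); rewrite ?divr_ge0 ?mulr_ge0 ?s0 ?m0 //.
    by have := hc' v w; lra.
  have hf : 2 * (- f v) <= sigma v + (r - M1).
    apply: (@abs2 R _ _ _); rewrite ?s0 //.
    by rewrite sqrrN; have := hfK v; lra.
  have hh : 2 * h w <= mu w / 2 + 2 * (M2 - r).
    apply: (@abs2 R _ _ _); rewrite ?divr_ge0 ?mulr_ge0 ?m0 //.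
    by have := hhK w; lra.
  have hm : 0 <= (2 * (r - M1) + 2 * (M2 - r) + `|r|) * sigma v.
    by rewrite mulr_ge0 ?s0 //; lra.
  have := s0 v; nra.
Qed.
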